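(* Let $U$ be a $\times_A$-Hopf algebra such that $U_\lhd$ is a projective right $A$-module. Then for all projective left $U$-modules $P,Q$, the left $U$-module $P\otimes Q$ is projective.
   Context: $k$ commutative ring, $A$ a $k$-algebra, $A^e=A\otimes_kA^{\mathrm{op}}$; an $A^e$-algebra is a $k$-algebra $U$ with $\eta:A^e\to U$; left $U$-modules are $A$-bimodules via $a\rhd m\lhd b=\eta(a\otimes b)m$, right $U$-modules via $a\blacktriangleright n\blacktriangleleft b=n\eta(b\otimes a)$. $U\otimes_AU$ is the tensor product of $U_\lhd$ and ${}_\rhd U$; $U\times_AU$ is the subset of $\sum u_i\otimes v_i$ with $\sum a\blacktriangleright u_i\otimes v_i=\sum u_i\otimes v_i\blacktriangleleft a$ for all $a$. A $\times_A$-bialgebra is an $A^e$-algebra $U$ with $A^e$-algebra maps $\hat\Delta:U\to U\times_AU$, $\hat\varepsilon:U\to\mathrm{End}_k(A)$ making $U$, via $\Delta(u)=u_{(1)}\otimes u_{(2)}$ and $\varepsilon(u)=\hat\varepsilon(u)(1)$, a coalgebra in $A$-bimodules. For left $U$-modules $M,N$, $M\otimes N$ is $M\otimes_AN$ with $u(m\otimes n)=u_{(1)}m\otimes u_{(2)}n$. $U$ is a $\times_A$-Hopf algebra if the Galois map ${}_\blacktriangleright U\otimes_{A^{\mathrm{op}}}U_\lhd\to U_\lhd\otimes_A{}_\rhd U$, $u\otimes v\mapsto u_{(1)}\otimes u_{(2)}v$, is bijective (${}_\blacktriangleright U\otimes_{A^{\mathrm{op}}}U_\lhd$ being $U\otimes_kU$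 modulo $a\blacktriangleright u\otimes v-u\otimes v\lhd a$). *)

(* Defs.v *)
From HB Require Import structures.
From mathcomp Require Import all_boot all_order all_algebra.
Set Implicit Arguments. Unset Strict Implicit. Unset Printing Implicit Defensive.
Import GRing.Theory.
Local Open Scope ring_scope.

(* Tensor products over a (noncommutative) ring, presented by generators and *)
(* relations: an element of M (x)_A N is represented by a finite formal sum   *)
(* [:: (m1,n1); ... ; (mr,nr)] of pure tensors, and [tens_eq] is the          *)
(* congruence (w.r.t. concatenation = addition) generated by commutativity of *)
(* addition, biadditivity, m(x)0 = 0 = 0(x)n, the balancing relation          *)
(* (m<a)(x)n = m(x)(a>n), and the given equalities on the factors (so that    *)
(* factors may themselves be presented modules, e.g. (U(x)U)(x)U).            *)
(* The abelian group M (x)_A N is the quotient seq (M*N) / tens_eq.          *)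
Section Tensor.
Variables (A M N : Type) (eqM : M -> M -> Prop) (eqN : N -> N -> Prop).
Variables (addM : M -> M -> M) (addN : N -> N -> N) (zM : M) (zN : N).
Variables (ract : M -> A -> M) (lact : A -> N -> N).

Inductive tens_eq : seq (M * N) -> seq (M * N) -> Prop :=
| te_refl s : tens_eq s s
| te_sym s r : tens_eq s r -> tens_eq r s
| te_trans s r q : tens_eq s r -> tens_eq r q -> tens_eq s q
| te_cat s s' r r' : tens_eq s s' -> tens_eq r r' -> tens_eq (s ++ r) (s' ++ r')
| te_comm s r : tens_eq (s ++ r) (r ++ s)
| te_addl m m' n : tens_eq [:: (addM m m', n)] [:: (m, n); (m', n)]
| te_addr m n n' : tens_eq [:: (m, addN n n')] [:: (m, n); (m, n')]
| te_zerol n : tens_eq [:: (zM, n)] [::]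
| te_zeror m : tens_eq [:: (m, zN)] [::]
| te_bal m a n : tens_eq [:: (ract m a, n)] [:: (m, lact a n)]
| te_eqM m m' n : eqM m m' -> tens_eq [:: (m, n)] [:: (m', n)]
| te_eqN m n n' : eqN n n' -> tens_eq [:: (m, n)] [:: (m, n')].
End Tensor.

Record premod (R : pzRingType) := PreMod {
  pm_car : Type;
  pm_eq : pm_car -> pm_car -> Prop;
  pm_add : pm_car -> pm_car -> pm_car;
  pm_act : R -> pm_car -> pm_car }.

Definition premod_of (R : pzRingType) (M : lmodType R) : premod R :=
  @PreMod R M (@eq M) (@GRing.add M) (@GRing.scale R M).

Definition pm_hom (R : pzRingType) (X : premod R) (M : lmodType R)
  (g : pm_car X -> M) : Prop :=
  [/\ forall x y, pm_eq x y -> g x = g y,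
      forall x y, g (pm_add x y) = g x + g y
    & forall r x, g (pm_act r x) = r *: g x].

Definition projective (R : pzRingType) (X : premod R) : Prop :=
  forall (M N : lmodType R) (f : M -> N),
    (forall x y, f (x + y) = f x + f y) ->
    (forall r x, f (r *: x) = r *: f x) ->
    (forall n, exists m, f m = n) ->
    forall g : pm_car X -> N, pm_hom g ->
    exists h : pm_car X -> M, pm_hom h /\ forall x, f (h x) = g x.

(* A^e-algebras.  A k-algebra map eta : A (x)_k A^op -> U is the same as a   *)
(* pair (s, t) of a k-algebra map s : A -> U and a k-algebra map             *)
(* t : A^op -> U with commuting images, via eta(a (x) b) = s a * t b.         *)
Definition is_Ae_algebra (k : comPzRingType) (A U : algType k)
  (s t : A -> U) : Prop :=
  [/\ [/\ forall a b, s (a + b) = s a + s b,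
          forall (c : k) a, s (c *: a) = c *: s a,
          forall a b, s (a * b) = s a * s b & s 1 = 1],
      [/\ forall a b, t (a + b) = t a + t b,
          forall (c : k) a, t (c *: a) = c *: t a,
          forall a b, t (a * b) = t b * t a & t 1 = 1]
    & forall a b, s a * t b = t b * s a].

Section XA.
Variables (k : comPzRingType) (A U : algType k) (s t : A -> U).

(* U_< (x)_A >U : relation  (t a * u) (x) v = u (x) (s a * v)   *)
Definition teqUU : seq (U * U) -> seq (U * U) -> Prop :=
  @tens_eq A U U eq eq +%R +%R 0 0 (fun u a => t a * u) (fun a v => s a * v).

(* >U (x)_{A^op} U_< : relation  (u * t a) (x) v = u (x) (t a * v)   *)
Definition teqUopU : seq (U * U) -> seq (U * U) -> Prop :=
  @tens_eq A U U eq eq +%R +%R 0 0 (fun u a => u * t a) (fun a v => t a * v).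

(* (U_< (x)_A >U_<) (x)_A >U *)
Definition teqUUU : seq (seq (U * U) * U) -> seq (seq (U * U) * U) -> Prop :=
  @tens_eq A (seq (U * U)) U teqUU eq cat +%R [::] 0
    (fun x a => [seq (p.1, t a * p.2) | p <- x]) (fun a v => s a * v).

Definition mulUU (x y : seq (U * U)) : seq (U * U) :=
  [seq (p.1 * q.1, p.2 * q.2) | p <- x, q <- y].

Definition galois_map (D : U -> seq (U * U)) (x : seq (U * U)) : seq (U * U) :=
  flatten [seq [seq (q.1, q.2 * p.2) | q <- D p.1] | p <- x].

(* The ×_A-bialgebra axioms for (s,t) with comultiplication
   D : U -> U x_A U (given on representatives) and counit E : U -> End_k(A). *)
Definition is_XA_bialgebra (D : U -> seq (U * U)) (E : U -> A -> A) : Prop :=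
  let eps u := E u 1 in
  [/\ is_Ae_algebra s t,
      (* D u lies in the Takeuchi product U x_A U *)
      forall u a, teqUU [seq (p.1 * t a, p.2) | p <- D u]
                        [seq (p.1, p.2 * s a) | p <- D u],
      (* D is a morphism of A^e-algebras U -> U x_A U *)
      [/\ forall u v, teqUU (D (u + v)) (D u ++ D v),
          forall (c : k) u, teqUU (D (c *: u)) [seq (c *: p.1, p.2) | p <- D u],
          forall u v, teqUU (D (u * v)) (mulUU (D u) (D v))
        & forall a b, teqUU (D (s a * t b)) [:: (s a, t b)]],
      (* E is a morphism of A^e-algebras U -> End_k(A) *)
      [/\ forall u, (forall x y, E u (x + y) = E u x + E u y)
                    /\ (forall (c : k) x, E u (c *: x) = c *: E u x),
          forall u v x, E (u + v) x = E u x + E v x,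
          forall (c : k) u x, E (c *: u) x = c *: E u x,
          forall u v x, E (u * v) x = E u (E v x)
        & forall a b x, E (s a * t b) x = a * x * b]
    & (* (U, Delta, eps) is a coalgebra in A-bimodules *)
      [/\ forall a b u, teqUU (D (s a * t b * u))
                              [seq (s a * p.1, t b * p.2) | p <- D u],
          forall a b u, eps (s a * t b * u) = a * eps u * b,
          (* coassociativity, in (U x_A U) x_A U *)
          forall u, teqUUU [seq (D p.1, p.2) | p <- D u]
                           (flatten [seq [seq ([:: (p.1, q.1)], q.2) | q <- D p.2]
                                    | p <- D u]),
          (* counitality: eps(u_(1)) > u_(2) = u = u_(1) < eps(u_(2)) *)
          forall u, \sum_(p <- D u) s (eps p.1) * p.2 = u
        & forall u, \sum_(p <- D u) t (eps p.2) * p.1 = u]].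

(* ×_A-Hopf algebra: bijective Galois map >U (x)_{A^op} U_< -> U_< (x)_A >U *)
Definition is_XA_Hopf (D : U -> seq (U * U)) (E : U -> A -> A) : Prop :=
  [/\ is_XA_bialgebra D E,
      forall x y, teqUU (galois_map D x) (galois_map D y) -> teqUopU x y
    & forall z, exists x, teqUU (galois_map D x) z].

(* U_< as a right A-module (= left A^c-module): u < a = t a * u *)
Definition U_ract_premod : premod (A^c) :=
  @PreMod (A^c) U eq +%R (fun (a : A^c) u => t a * u).

(* The left U-module P (x) Q = P (x)_A Q with u(p (x) q) = u_(1)p (x) u_(2)q *)
Definition tens_premod (D : U -> seq (U * U)) (P Q : lmodType U) : premod U :=
  @PreMod U (seq (P * Q))
    (@tens_eq A P Q eq eq +%R +%R 0 0 (fun p a => t a *: p) (fun a q => s a *: q))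
    cat
    (fun u x => flatten [seq [seq (d.1 *: pq.1, d.2 *: pq.2) | d <- D u]
                        | pq <- x]).
End XA.

(* Main.v *)
Require Import Defs.
From HB Require Import structures.
From mathcomp Require Import all_boot all_order all_algebra.
From Stdlib Require Import ClassicalEpsilon FunctionalExtensionality ProofIrrelevance.
Set Implicit Arguments. Unset Strict Implicit. Unset Printing Implicit Defensive.
Import GRing.Theory.
Local Open Scope ring_scope.

Section TensGen.
Variables (A : Type) (M N : eqType) (eqM : M -> M -> Prop) (eqN : N -> N -> Prop).
Variables (addM : M -> M -> M) (addN : N -> N -> N) (zM : M) (zN : N).
Variables (ract : M -> A -> M) (lact : A -> N -> N).
Local Notation te := (tens_eq eqM eqN addM addN zM zN ract lact).

Lemma te_cons x s r : te s r -> te (x :: s) (x :: r).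
Proof. by move=> h; apply: (te_cat (s := [:: x]) (s' := [:: x])) => //; apply: te_refl. Qed.

Lemma te_rem x r : x \in r -> te r (x :: rem x r).
Proof.
elim: r => // y r IH; rewrite inE /=; case: (eqVneq y x) => [->|nxy].
  by move=> _; exact: te_refl.
move=> xr.
apply: te_trans (te_cons y (IH xr)) _.
have := te_comm eqM eqN addM addN zM zN ract lact [:: y] [:: x].
move=> h; exact: (te_cat h (te_refl _ _ _ _ _ _ _ _ (rem x r))).
Qed.

Lemma te_perm s r : perm_eq s r -> te s r.
Proof.
elim: s r => [|x s IH] r.
  by rewrite perm_sym => /perm_nilP ->; apply: te_refl.
move=> pr; have xr : x \in r by rewrite -(perm_mem pr) mem_head.
have : perm_eq s (rem x r).
  by rewrite -(perm_cons x); apply: perm_trans pr (perm_to_rem xr).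
move/IH=> h; apply: te_trans (te_sym (te_rem xr)); exact: te_cons.
Qed.

Lemma te_catl s s' r : te s s' -> te (s ++ r) (s' ++ r).
Proof. by move=> h; apply: te_cat h (te_refl _ _ _ _ _ _ _ _ _). Qed.
Lemma te_catr s r r' : te r r' -> te (s ++ r) (s ++ r').
Proof. by move=> h; apply: te_cat (te_refl _ _ _ _ _ _ _ _ _) h. Qed.

Lemma te_flatten (I : Type) (F G : I -> seq (M * N)) (l : seq I) :
  (forall i, te (F i) (G i)) -> te (flatten (map F l)) (flatten (map G l)).
Proof.
move=> h; elim: l => [|i l IH] /=; first exact: te_refl.
exact: te_cat.
Qed.
End TensGen.
Section Res.
Variables (k : comPzRingType) (A U : algType k).
Record antimor := AntiMor { am_fun :> A -> U;
  am_D : forall a b, am_fun (a + b) = am_fun a + am_fun b;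
  am_M : forall a b, am_fun (a * b) = am_fun b * am_fun a;
  am_1 : am_fun 1 = 1 }.
Variables (t : antimor) (M : lmodType U).
Let tD := am_D t. Let tM := am_M t. Let t1 := am_1 t.
Definition resT : Type := let _ := t in M.
HB.instance Definition _ := GRing.Zmodule.on resT.
Definition rscale (a : A^c) (m : resT) : resT := t a *: (m : M).
Lemma rscaleA a b v : rscale a (rscale b v) = rscale (a * b) v.
Proof. by rewrite /rscale scalerA tM. Qed.
Lemma rscale1 : left_id 1 rscale.
Proof. by move=> v; rewrite /rscale t1 scale1r. Qed.
Lemma rscaleDr : right_distributive rscale +%R.
Proof. by move=> a u v; rewrite /rscale scalerDr. Qed.
Lemma rscaleDl v : {morph rscale^~ v: a b / a + b}.
Proof. by move=> a b; rewrite /rscale tD scalerDl. Qed.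
HB.instance Definition _ := GRing.Zmodule_isLmodule.Build (A^c) resT rscaleA rscale1 rscaleDr rscaleDl.
Lemma resmod_scale (a : A^c) (m : resT) : a *: m = (t a *: (m : M) : M).
Proof. reflexivity. Qed.
Lemma resmod_add (m m' : resT) : m + m' = ((m : M) + m' : M).
Proof. reflexivity. Qed.
End Res.

Section UU.
Variables (k : comPzRingType) (A U : algType k) (s : A -> U) (t : antimor A U).
Variable D : U -> seq (U * U).
Hypothesis s1 : s 1 = 1.
Hypothesis HTak : forall u a, teqUU s t [seq (p.1 * t a, p.2) | p <- D u]
                        [seq (p.1, p.2 * s a) | p <- D u].
Hypothesis HDM : forall u v, teqUU s t (D (u * v)) (mulUU (D u) (D v)).
Hypothesis HDst : forall a b, teqUU s t (D (s a * t b)) [:: (s a, t b)].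

Local Notation teq := (teqUU s t).

Definition rmul (y : U * U) (x : seq (U * U)) := [seq (p.1 * y.1, p.2 * y.2) | p <- x].
Definition act (u : U) (x : seq (U * U)) :=
  flatten [seq [seq (d.1 * pq.1, d.2 * pq.2) | d <- D u] | pq <- x].

Lemma teq_refl x : teq x x. Proof. exact: te_refl. Qed.
Lemma teq_sym x y : teq x y -> teq y x. Proof. exact: te_sym. Qed.
Lemma teq_trans x y z : teq x y -> teq y z -> teq x z. Proof. exact: te_trans. Qed.
Lemma teq_cat x x' y y' : teq x x' -> teq y y' -> teq (x ++ y) (x' ++ y').
Proof. exact: te_cat. Qed.
Lemma teq_eq x y : x = y -> teq x y. Proof. by move=> ->; exact: teq_refl. Qed.
Lemma teq_perm x y : perm_eq x y -> teq x y. Proof. exact: te_perm. Qed.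
Lemma teq_flatten (I : Type) (F G : I -> seq (U * U)) (l : seq I) :
  (forall i, teq (F i) (G i)) -> teq (flatten (map F l)) (flatten (map G l)).
Proof. exact: te_flatten. Qed.

Lemma rmul_teq y x x' : teq x x' -> teq (rmul y x) (rmul y x').
Proof.
elim => {x x'} /=.
- by move=> x; exact: teq_refl.
- by move=> x x' _ h; exact: teq_sym.
- by move=> x x' x'' _ h1 _ h2; exact: teq_trans h1 h2.
- by move=> x x' z z' _ h1 _ h2; rewrite /rmul !map_cat; exact: teq_cat.
- by move=> x z; rewrite /rmul !map_cat; exact: te_comm.
- by move=> m m' n; rewrite mulrDl; exact: te_addl.
- by move=> m n n'; rewrite mulrDl; exact: te_addr.
- by move=> n; rewrite mul0r; exact: te_zerol.
- by move=> m; rewrite mul0r; exact: te_zeror.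
- by move=> m a n; rewrite -!mulrA; exact: te_bal.
- by move=> m m' n ->; exact: teq_refl.
- by move=> m n n' ->; exact: teq_refl.
Qed.

Lemma map_flat1 (I T : Type) (f : I -> T) (l : seq I) : map f l = flatten [seq [:: f i] | i <- l].
Proof. by elim: l => //= i l ->. Qed.

Lemma teq_map_nil (I : Type) (f : I -> U * U) (l : seq I) :
  (forall i, teq [:: f i] [::]) -> teq (map f l) [::].
Proof.
move=> h; elim: l => [|i l IH] /=; first exact: teq_refl.
exact: (teq_cat (x := [:: f i]) (y := map f l) (x' := [::]) (y' := [::]) (h i) IH).
Qed.

Lemma act_cat u x y : act u (x ++ y) = act u x ++ act u y.
Proof. by rewrite /act map_cat flatten_cat. Qed.

Lemma perm_pairs (I : Type) (a b : I -> U * U) (l : seq I) :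
  perm_eq (flatten [seq [:: a i; b i] | i <- l]) (map a l ++ map b l).
Proof.
elim: l => //= i l IH; rewrite perm_cons.
rewrite -(cat1s (b i) (map b l)).
rewrite perm_sym perm_catCA /= perm_cons perm_sym; exact: IH.
Qed.

Lemma act_teq u x x' : teq x x' -> teq (act u x) (act u x').
Proof.
elim => {x x'}.
- by move=> x; exact: teq_refl.
- by move=> x x' _ h; exact: teq_sym.
- by move=> x x' x'' _ h1 _ h2; exact: teq_trans h1 h2.
- by move=> x x' z z' _ h1 _ h2; rewrite !act_cat; exact: teq_cat.
- by move=> x z; rewrite !act_cat; exact: te_comm.
- move=> m m' n; rewrite /act /= !cats0.
  apply: teq_trans (teq_perm (perm_pairs _ _ _)).
  rewrite map_flat1; apply: teq_flatten => d /=; rewrite mulrDr; exact: te_addl.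
- move=> m n n'; rewrite /act /= !cats0.
  apply: teq_trans (teq_perm (perm_pairs _ _ _)).
  rewrite map_flat1; apply: teq_flatten => d /=; rewrite mulrDr; exact: te_addr.
- move=> n; rewrite /act /= cats0; apply: teq_map_nil => d; rewrite mulr0; exact: te_zerol.
- move=> n; rewrite /act /= cats0; apply: teq_map_nil => d; rewrite mulr0; exact: te_zeror.
- move=> m a n; rewrite /act /= !cats0.
  have -> : [seq (d.1 * (t a * m), d.2 * n) | d <- D u] =
            rmul (m, n) [seq (p.1 * t a, p.2) | p <- D u].
    by rewrite /rmul -map_comp; apply: eq_map => d /=; rewrite mulrA.
  have -> : [seq (d.1 * m, d.2 * (s a * n)) | d <- D u] =
            rmul (m, n) [seq (p.1, p.2 * s a) | p <- D u].
    by rewrite /rmul -map_comp; apply: eq_map => d /=; rewrite mulrA.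
  exact: rmul_teq.
- by move=> m m' n ->; exact: teq_refl.
- by move=> m n n' ->; exact: teq_refl.
Qed.
Hypothesis Hinj : forall x y, teqUU s t (galois_map D x) (galois_map D y) -> teqUopU t x y.
Hypothesis Hsurj : forall z, exists x, teqUU s t (galois_map D x) z.
Hypothesis Hproj : projective (U_ract_premod t).


Lemma galois_cat x y : galois_map D (x ++ y) = galois_map D x ++ galois_map D y.
Proof. by rewrite /galois_map map_cat flatten_cat. Qed.

Lemma act_flatten u L : act u (flatten L) = flatten (map (act u) L).
Proof. by elim: L => [|l L IH] //=; rewrite act_cat IH. Qed.

Lemma perm_swap (T1 T2 : Type) (R : eqType) (f : T1 -> T2 -> R) a b :
  perm_eq [seq f x y | x <- a, y <- b] [seq f x y | y <- b, x <- a].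
Proof.
elim: a => [|x a IH] /=; first by elim: b.
rewrite perm_sym (perm_allpairs_consr (fun y x => f x y) b (fun=> x) (fun=> a)).
by rewrite perm_cat2l perm_sym.
Qed.

Lemma galois_act w x :
  teq (galois_map D [seq (w * p.1, p.2) | p <- x]) (act w (galois_map D x)).
Proof.
rewrite /galois_map act_flatten -!map_comp; apply: teq_flatten => -[u v] /=.
apply: (@teq_trans _ (rmul (1, v) (D (w * u)))).
  by rewrite /rmul; apply: teq_eq; apply: eq_map => q /=; rewrite mulr1.
apply: teq_trans (rmul_teq _ (HDM w u)) _.
have -> : rmul (1, v) (mulUU (D w) (D u)) =
    [seq (d.1 * q.1, d.2 * (q.2 * v)) | d <- D w, q <- D u].
  by rewrite /rmul /mulUU map_allpairs; apply: eq_allpairs => d q /=; rewrite mulr1 mulrA.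
apply: teq_perm; apply: perm_trans (perm_swap _ _ _) _.
by rewrite /act -map_comp.
Qed.

Lemma UU_lift (M N : lmodType U) (f : M -> N) :
  (forall x y, f (x + y) = f x + f y) -> (forall r x, f (r *: x) = r *: f x) ->
  (forall n, exists m, f m = n) ->
  forall g : seq (U * U) -> N,
  (forall x y, teq x y -> g x = g y) -> (forall x y, g (x ++ y) = g x + g y) ->
  (forall u x, g (act u x) = u *: g x) ->
  exists h : seq (U * U) -> M,
    [/\ forall x y, teq x y -> h x = h y, forall x y, h (x ++ y) = h x + h y
      & forall u x, h (act u x) = u *: h x] /\ forall x, f (h x) = g x.
Proof.
move=> fD fZ fS g g1 g2 g3.
have g0 : g [::] = 0 by apply: (addrI (g [::])); rewrite -g2 addr0.
have hG : pm_hom (X := U_ract_premod t) (M := resT t N) (fun v => g [:: (1, v)]).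
  split.
  - by move=> x y /= ->.
  - by move=> x y /=; rewrite -g2; apply: g1; apply: te_addr.
  move=> r x /=; rewrite resmod_scale -g3; apply: g1.
  have E := rmul_teq (1, x) (HDst 1 r); rewrite s1 mul1r /rmul /= mulr1 in E.
  by apply: teq_sym; rewrite /act /= cats0.
have := Hproj (M := resT t M) (N := resT t N) (f := f)
   (fun x y => fD x y) (fun r x => fZ (t r) x) fS hG.
case=> H [[_ H2 H3] fH].
pose ginv z := proj1_sig (constructive_indefinite_description _ (Hsurj z)).
have gi z : teq (galois_map D (ginv z)) z.
  exact: (proj2_sig (constructive_indefinite_description _ (Hsurj z))).
pose Sm (x : seq (U * U)) : M := \sum_(p <- x) p.1 *: (H p.2 : M).
have H0 : (H 0 : M) = 0.
  have e := H2 0 0; rewrite /= addr0 in e.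
  by apply: (addIr (H 0 : M)); rewrite add0r; exact: (esym e).
have Sm_teq x y : teqUopU t x y -> Sm x = Sm y.
  elim => {x y}.
  - by [].
  - by move=> x y _ ->.
  - by move=> x y z _ -> _ ->.
  - by move=> x x' y y' _ h1 _ h2; rewrite /Sm !big_cat /= -/(Sm x) -/(Sm y) h1 h2.
  - move=> x y; rewrite /Sm !big_cat /=; exact: addrC.
  - by move=> m m' n; rewrite /Sm !big_cons !big_nil /= !addr0 scalerDl.
  - move=> m n n'; rewrite /Sm !big_cons !big_nil /= !addr0.
    by rewrite -scalerDr -[X in _ = _ *: X]H2.
  - by move=> n; rewrite /Sm !big_cons !big_nil /= !addr0 scale0r.
  - by move=> m; rewrite /Sm !big_cons !big_nil /= !addr0 H0 scaler0.
  - move=> m a n; rewrite /Sm !big_cons !big_nil /= !addr0.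
    have e := H3 a n; rewrite /= resmod_scale in e.
    by rewrite e scalerA.
  - by move=> m m' n ->.
  - by move=> m n n' ->.
exists (fun z => Sm (ginv z)); split; first split.
- move=> x y xy; apply: Sm_teq; apply: Hinj.
  by apply: teq_trans (gi x) _; apply: teq_trans xy (teq_sym (gi y)).
- move=> x y; rewrite -big_cat /= -/(Sm (ginv x ++ ginv y)); apply: Sm_teq; apply: Hinj.
  rewrite galois_cat; apply: teq_trans (gi _) _.
  exact: teq_sym (teq_cat (gi x) (gi y)).
- move=> u x; rewrite -[u *: _]/(u *: Sm (ginv x)).
  rewrite /Sm scaler_sumr.
  have -> : \sum_(p <- ginv x) u *: (p.1 *: (H p.2 : M)) =
            Sm [seq (u * p.1, p.2) | p <- ginv x].
    by rewrite /Sm big_map; apply: eq_bigr => p _; rewrite scalerA.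
  apply: Sm_teq; apply: Hinj.
  apply: teq_trans (gi _) _; apply: teq_sym.
  apply: teq_trans (galois_act _ _) _.
  exact: act_teq (gi x).
- move=> z; rewrite /Sm.
  have f0 : f 0 = 0.
    have e := fD 0 0; rewrite addr0 in e.
    by apply: (addIr (f 0)); rewrite add0r; exact: (esym e).
  rewrite (big_morph f fD f0).
  have gflat L : g (flatten L) = \sum_(l <- L) g l.
    by elim: L => [|l L IH] /=; rewrite ?big_nil ?big_cons ?g0 // g2 IH.
  rewrite -(g1 _ _ (gi z)) /galois_map gflat big_map.
  apply: eq_bigr => -[u v] _ /=.
  rewrite fZ fH -g3; congr g.
  by rewrite /act /= cats0; apply: eq_map => q; rewrite mulr1.
Qed.
End UU.
Section Free.
Variables (R : pzRingType) (X : eqType).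

Record fsfun := FSF { fs_val :> X -> R;
  fs_fin : exists l : seq X, forall x, x \notin l -> fs_val x = 0 }.

Lemma fs_ext (a b : fsfun) : (forall x, a x = b x) -> a = b.
Proof.
case: a => fa ha; case: b => fb hb /= e.
have efb : fa = fb by apply: functional_extensionality.
subst fb; congr FSF; apply: proof_irrelevance.
Qed.

Definition fs_eqb (a b : fsfun) : bool :=
  if excluded_middle_informative (a = b) then true else false.
Lemma fs_eqP : Equality.axiom fs_eqb.
Proof. by move=> a b; rewrite /fs_eqb; case: excluded_middle_informative => h; constructor. Qed.
HB.instance Definition _ := hasDecEq.Build fsfun fs_eqP.

Definition fs_find (P : pred fsfun) (n : nat) : option fsfun :=
  match excluded_middle_informative (exists x, P x) with
  | left h => Some (proj1_sig (constructive_indefinite_description _ h))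
  | right _ => None end.
Lemma fs_find_correct P n x : fs_find P n = Some x -> P x.
Proof.
rewrite /fs_find; case: excluded_middle_informative => // h [<-].
exact: proj2_sig (constructive_indefinite_description _ h).
Qed.
Lemma fs_find_complete (P : pred fsfun) : (exists x, P x) -> exists n, fs_find P n.
Proof. by move=> h; exists 0%N; rewrite /fs_find; case: excluded_middle_informative. Qed.
Lemma fs_find_ext (P Q : pred fsfun) : P =1 Q -> fs_find P =1 fs_find Q.
Proof. by move=> e; have -> : P = Q by apply: functional_extensionality. Qed.
HB.instance Definition _ := hasChoice.Build fsfun fs_find_correct fs_find_complete fs_find_ext.

Lemma fs0_fin : exists l : seq X, forall x, x \notin l -> (fun _ : X => 0 : R) x = 0.
Proof. by exists [::]. Qed.
Definition fs0 := FSF fs0_fin.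
Lemma fsadd_fin (a b : fsfun) : exists l : seq X, forall x, x \notin l -> (fun x => a x + b x) x = 0.
Proof.
case: (fs_fin a) => la ha; case: (fs_fin b) => lb hb; exists (la ++ lb) => x.
by rewrite mem_cat negb_or => /andP[xa xb] /=; rewrite ha // hb // addr0.
Qed.
Definition fsadd a b := FSF (fsadd_fin a b).
Lemma fsopp_fin (a : fsfun) : exists l : seq X, forall x, x \notin l -> (fun x => - a x) x = 0.
Proof. by case: (fs_fin a) => la ha; exists la => x xa /=; rewrite ha // oppr0. Qed.
Definition fsopp a := FSF (fsopp_fin a).
Lemma fsscale_fin (r : R) (a : fsfun) : exists l : seq X, forall x, x \notin l -> (fun x => r * a x) x = 0.
Proof. by case: (fs_fin a) => la ha; exists la => x xa /=; rewrite ha // mulr0. Qed.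
Definition fsscale r a := FSF (fsscale_fin r a).

Lemma fsaddA : associative fsadd.
Proof. by move=> a b c; apply: fs_ext => x /=; rewrite addrA. Qed.
Lemma fsaddC : commutative fsadd.
Proof. by move=> a b; apply: fs_ext => x /=; rewrite addrC. Qed.
Lemma fsadd0 : left_id fs0 fsadd.
Proof. by move=> a; apply: fs_ext => x /=; rewrite add0r. Qed.
Lemma fsaddN : left_inverse fs0 fsopp fsadd.
Proof. by move=> a; apply: fs_ext => x /=; rewrite addNr. Qed.
HB.instance Definition _ := GRing.isZmodule.Build fsfun fsaddA fsaddC fsadd0 fsaddN.
Lemma fsscaleA a b v : fsscale a (fsscale b v) = fsscale (a * b) v.
Proof. by apply: fs_ext => x /=; rewrite mulrA. Qed.
Lemma fsscale1 : left_id 1 fsscale.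
Proof. by move=> a; apply: fs_ext => x /=; rewrite mul1r. Qed.
Lemma fsscaleDr : right_distributive fsscale +%R.
Proof. by move=> r a b; apply: fs_ext => x /=; rewrite mulrDr. Qed.
Lemma fsscaleDl v : {morph fsscale^~ v: a b / a + b}.
Proof. by move=> a b; apply: fs_ext => x /=; rewrite mulrDl. Qed.
HB.instance Definition _ := GRing.Zmodule_isLmodule.Build R fsfun fsscaleA fsscale1 fsscaleDr fsscaleDl.

Lemma fs_addE (a b : fsfun) x : (a + b) x = a x + b x. Proof. by []. Qed.
Lemma fs_scaleE r (a : fsfun) x : (r *: a) x = r * a x. Proof. by []. Qed.

Definition fs_supp (a : fsfun) : seq X := proj1_sig (constructive_indefinite_description _ (fs_fin a)).
Lemma fs_suppP a x : x \notin fs_supp a -> a x = 0.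
Proof. exact: (proj2_sig (constructive_indefinite_description _ (fs_fin a))). Qed.
End Free.

Section Fsum.
Variables (X : eqType) (V : nmodType).
Lemma sum_undup_sub (l1 l2 : seq X) (F : X -> V) : {subset l1 <= l2} ->
  (forall x, x \notin l1 -> F x = 0) ->
  \sum_(x <- undup l2) F x = \sum_(x <- undup l1) F x.
Proof.
move=> sub h; rewrite (bigID (fun x => x \in l1)) /=.
rewrite [X in _ + X]big1 ?addr0; last by move=> x /h.
rewrite -big_filter; apply: perm_big; apply: uniq_perm.
- by apply: filter_uniq; exact: undup_uniq.
- exact: undup_uniq.
move=> x; rewrite mem_filter !mem_undup; apply/andP/idP => [[] //|xl]; split=> //.
exact: sub.
Qed.
Lemma fsum_eq (l1 l2 : seq X) (F : X -> V) :
  (forall x, x \notin l1 -> F x = 0) -> (forall x, x \notin l2 -> F x = 0) ->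
  \sum_(x <- undup l1) F x = \sum_(x <- undup l2) F x.
Proof.
move=> h1 h2; rewrite -(@sum_undup_sub l1 (l1 ++ l2)) //; last by move=> x xl; rewrite mem_cat xl.
rewrite (@sum_undup_sub l2 (l1 ++ l2)) //; by move=> x xl; rewrite mem_cat xl orbT.
Qed.
End Fsum.
Section Dual.
Variables (R : pzRingType) (P : lmodType R).

Definition fs_pi (a : fsfun R P) : P := \sum_(x <- undup (fs_supp a)) a x *: x.

Lemma fs_piE (a : fsfun R P) l : (forall x, x \notin l -> a x = 0) ->
  fs_pi a = \sum_(x <- undup l) a x *: x.
Proof.
move=> h; apply: fsum_eq => x xl; first by rewrite fs_suppP // scale0r.
by rewrite h // scale0r.
Qed.

Lemma dual_basis : projective (premod_of P) ->
  exists c : P -> P -> R, exists S : P -> seq P,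
   [/\ forall p q x, c (p + q) x = c p x + c q x,
       forall r p x, c (r *: p) x = r * c p x,
       forall p x, x \notin S p -> c p x = 0
     & forall p, p = \sum_(x <- undup (S p)) c p x *: x].
Proof.
move=> hP.
have piD (a b : fsfun R P) : fs_pi (a + b) = fs_pi a + fs_pi b.
  rewrite (@fs_piE (a + b) (fs_supp a ++ fs_supp b)); last first.
    move=> x; rewrite mem_cat negb_or => /andP[xa xb].
    by rewrite fs_addE !fs_suppP // addr0.
  rewrite (@fs_piE a (fs_supp a ++ fs_supp b)); last first.
    by move=> x; rewrite mem_cat negb_or => /andP[xa xb]; rewrite fs_suppP.
  rewrite (@fs_piE b (fs_supp a ++ fs_supp b)); last first.
    by move=> x; rewrite mem_cat negb_or => /andP[xa xb]; rewrite fs_suppP.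
  by rewrite -big_split /=; apply: eq_bigr => x _; rewrite -scalerDl.
have piZ r (a : fsfun R P) : fs_pi (r *: a) = r *: fs_pi a.
  rewrite (@fs_piE (r *: a) (fs_supp a)); last first.
    by move=> x xa; rewrite fs_scaleE fs_suppP // mulr0.
  by rewrite /fs_pi scaler_sumr; apply: eq_bigr => x _; rewrite fs_scaleE scalerA.
have piS (p : P) : exists a : fsfun R P, fs_pi a = p.
  have dfin : exists l : seq P, forall x, x \notin l -> (fun x => if x == p then 1 else 0 : R) x = 0.
    by exists [:: p] => x; rewrite inE /= => /negbTE ->.
  exists (FSF dfin); rewrite (@fs_piE _ [:: p]) /=; last first.
    by move=> x; rewrite inE /= => /negbTE ->.
  by rewrite big_cons big_nil eqxx scale1r addr0.
have hid : pm_hom (X := premod_of P) (M := P) id by split.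
have [h [[_ h2 h3] hh]] := hP _ _ fs_pi piD piZ piS id hid.
exists (fun p x => h p x), (fun p => fs_supp (h p)); split.
- by move=> p q x /=; rewrite h2.
- by move=> r p x /=; rewrite h3.
- by move=> p x xs; rewrite fs_suppP.
- by move=> p; rewrite -[p in LHS]hh.
Qed.
End Dual.
Theorem theorem3p5 (k : comPzRingType) (A U : algType k) (s t : A -> U)
  (D : U -> seq (U * U)) (E : U -> A -> A) :
  is_XA_Hopf s t D E ->
  projective (U_ract_premod t) ->
  forall P Q : lmodType U,
    projective (premod_of P) -> projective (premod_of Q) ->
    projective (tens_premod s t D P Q).
Proof.
case=> [[[[_ _ _ s1] [tD _ tM t1] _] HTak [_ _ HDM HDst] _ _] Hinj Hsurj] hU P Q hP hQ.
pose TT := @AntiMor _ _ _ t tD tM t1.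
have UL := @UU_lift _ _ _ s TT D s1 HTak HDM HDst Hinj Hsurj hU.
have [c [Sc [c1 c2 c3 c4]]] := dual_basis hP.
have [d [Sd [d1 d2 d3 d4]]] := dual_basis hQ.
move=> M N f fD fZ fS g [g1 g2 g3].
pose teP := tens_eq (@eq P) (@eq Q) +%R +%R 0 0 (fun p a => t a *: p) (fun a q => s a *: q).
have g0 : g [::] = 0 by apply: (addrI (g [::])); rewrite -g2 addr0.
have f0 : f 0 = 0.
  have e := fD 0 0; rewrite addr0 in e.
  by apply: (addIr (f 0)); rewrite add0r; exact: (esym e).
have map_te (p' : P) (q' : Q) x y : teqUU s t x y ->
    teP [seq (pr.1 *: p', pr.2 *: q') | pr <- x] [seq (pr.1 *: p', pr.2 *: q') | pr <- y].
  elim => {x y} /=.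
  - by move=> x; exact: te_refl.
  - by move=> x y _ h; exact: te_sym.
  - by move=> x y z _ h1 _ h2; exact: te_trans h1 h2.
  - by move=> x x' y y' _ h1 _ h2; rewrite !map_cat; exact: te_cat.
  - by move=> x y; rewrite !map_cat; exact: te_comm.
  - by move=> m m' n; rewrite scalerDl; exact: te_addl.
  - by move=> m n n'; rewrite scalerDl; exact: te_addr.
  - by move=> n; rewrite scale0r; exact: te_zerol.
  - by move=> m; rewrite scale0r; exact: te_zeror.
  - by move=> m a n; rewrite -!scalerA; exact: te_bal.
  - by move=> m m' n ->; exact: te_refl.
  - by move=> m n n' ->; exact: te_refl.
have HL (pq : P * Q) : exists h : seq (U * U) -> M,
    [/\ forall x y, teqUU s t x y -> h x = h y, forall x y, h (x ++ y) = h x + h y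
      & forall u x, h (act D u x) = u *: h x] /\
    forall x, f (h x) = g [seq (pr.1 *: pq.1, pr.2 *: pq.2) | pr <- x].
  apply: (UL M N f fD fZ fS).
  - by move=> x y xy; apply: g1; apply: map_te.
  - by move=> x y; rewrite map_cat g2.
  - move=> u x; rewrite -g3; congr g.
    rewrite /act /= map_flatten -!map_comp; congr flatten; apply: eq_map => pr /=.
    by rewrite -map_comp; apply: eq_map => e /=; rewrite !scalerA.
pose H (p' : P) (q' : Q) := proj1_sig (constructive_indefinite_description _ (HL (p', q'))).
have HP p' q' := proj2_sig (constructive_indefinite_description _ (HL (p', q'))).
have Hr p' q' x y : teqUU s t x y -> H p' q' x = H p' q' y.
  by case: (HP p' q') => [[h1 _ _] _]; exact: h1.
have Ha p' q' x y : H p' q' (x ++ y) = H p' q' x + H p' q' y.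
  by case: (HP p' q') => [[_ h2 _] _]; exact: h2.
have Hl p' q' u x : H p' q' (act D u x) = u *: H p' q' x.
  by case: (HP p' q') => [[_ _ h3] _]; exact: h3.
have Hf p' q' x : f (H p' q' x) = g [seq (pr.1 *: p', pr.2 *: q') | pr <- x].
  by case: (HP p' q') => [_ h4]; exact: h4.
clearbody H; clear HP HL UL.
have H0 p' q' : H p' q' [::] = 0 by apply: (addrI (H p' q' [::])); rewrite -Ha addr0.
have H0l p' q' b : H p' q' [:: (0, b)] = 0.
  by rewrite (Hr _ _ _ [::]) ?H0 //; exact: te_zerol.
have H0r p' q' a : H p' q' [:: (a, 0)] = 0.
  by rewrite (Hr _ _ _ [::]) ?H0 //; exact: te_zeror.
have Hmap p' q' (I : Type) (F : I -> U * U) l :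
    H p' q' (map F l) = \sum_(i <- l) H p' q' [:: F i].
  elim: l => [|i l IH] /=; first by rewrite big_nil H0.
  by rewrite big_cons -IH -Ha.
have c0 x : c 0 x = 0.
  have e := c1 0 0 x; rewrite addr0 in e.
  by apply: (addIr (c 0 x)); rewrite add0r; exact: (esym e).
have d0 x : d 0 x = 0.
  have e := d1 0 0 x; rewrite addr0 in e.
  by apply: (addIr (d 0 x)); rewrite add0r; exact: (esym e).
pose hpq (p : P) (q : Q) : M :=
  \sum_(p' <- undup (Sc p)) \sum_(q' <- undup (Sd q)) H p' q' [:: (c p p', d q q')].
have hpqE p q l1 l2 : (forall x, x \notin l1 -> c p x = 0) ->
    (forall x, x \notin l2 -> d q x = 0) ->
    hpq p q = \sum_(p' <- undup l1) \sum_(q' <- undup l2) H p' q' [:: (c p p', d q q')].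
  move=> h1 h2; rewrite /hpq.
  rewrite (@fsum_eq _ _ (Sc p) l1); first last.
  - by move=> x /h1 ->; apply: big1 => y _; exact: H0l.
  - by move=> x /c3 ->; apply: big1 => y _; exact: H0l.
  apply: eq_bigr => x _; apply: fsum_eq => y hy.
  - by rewrite d3 //; exact: H0r.
  - by rewrite h2 //; exact: H0r.
have zsub (T : eqType) (V : zmodType) (F : T -> V) (l1 l2 : seq T) :
    (forall x, x \notin l1 -> F x = 0) -> {subset l1 <= l2} -> forall x, x \notin l2 -> F x = 0.
  by move=> h sub x xl; apply: h; apply: contra xl; exact: sub.
pose h (x : seq (P * Q)) : M := \sum_(pq <- x) hpq pq.1 pq.2.
have gsum x : g x = \sum_(pq <- x) g [:: pq].
  by elim: x => [|pq x IH]; rewrite ?big_nil ?g0 // big_cons -IH -g2.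
have gsuml (I : Type) (l : seq I) (F : I -> P) q :
    g [:: (\sum_(i <- l) F i, q)] = \sum_(i <- l) g [:: (F i, q)].
  elim: l => [|i l IH]; rewrite ?big_nil.
    by rewrite (g1 _ [::]) ?g0 //; exact: te_zerol.
  by rewrite !big_cons -IH -g2; apply: g1; exact: te_addl.
have gsumr (I : Type) (l : seq I) (F : I -> Q) p :
    g [:: (p, \sum_(i <- l) F i)] = \sum_(i <- l) g [:: (p, F i)].
  elim: l => [|i l IH]; rewrite ?big_nil.
    by rewrite (g1 _ [::]) ?g0 //; exact: te_zeror.
  by rewrite !big_cons -IH -g2; apply: g1; exact: te_addr.
exists h; split; first split.
- move=> x y /=; elim => {x y}.
  + by [].
  + by move=> x y _ ->.
  + by move=> x y z _ -> _ ->.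
  + by move=> x x' y y' _ h1 _ h2; rewrite /h !big_cat -/(h x) -/(h y) h1 h2.
  + by move=> x y; rewrite /h !big_cat /= addrC.
  + move=> m m' n; rewrite /h !big_cons !big_nil /= !addr0.
    pose L := Sc m ++ Sc m' ++ Sc (m + m').
    have sub1 : {subset Sc m <= L} by move=> z zs; rewrite !mem_cat zs.
    have sub2 : {subset Sc m' <= L} by move=> z zs; rewrite !mem_cat zs orbT.
    have sub3 : {subset Sc (m + m') <= L} by move=> z zs; rewrite !mem_cat zs !orbT.
    rewrite (hpqE _ _ L (Sd n) (zsub _ _ _ _ _ (c3 _) sub3) (d3 _)).
    rewrite (hpqE _ _ L (Sd n) (zsub _ _ _ _ _ (c3 _) sub1) (d3 _)).
    rewrite (hpqE _ _ L (Sd n) (zsub _ _ _ _ _ (c3 _) sub2) (d3 _)).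
    rewrite -big_split; apply: eq_bigr => p' _; rewrite -big_split; apply: eq_bigr => q' _.
    rewrite c1 (Hr _ _ _ [:: (c m p', d n q'); (c m' p', d n q')]); last exact: te_addl.
    exact: (Ha _ _ [:: _] [:: _]).
  + move=> m n n'; rewrite /h !big_cons !big_nil /= !addr0.
    pose L := Sd n ++ Sd n' ++ Sd (n + n').
    have sub1 : {subset Sd n <= L} by move=> z zs; rewrite !mem_cat zs.
    have sub2 : {subset Sd n' <= L} by move=> z zs; rewrite !mem_cat zs orbT.
    have sub3 : {subset Sd (n + n') <= L} by move=> z zs; rewrite !mem_cat zs !orbT.
    rewrite (hpqE _ _ (Sc m) L (c3 _) (zsub _ _ _ _ _ (d3 _) sub3)).
    rewrite (hpqE _ _ (Sc m) L (c3 _) (zsub _ _ _ _ _ (d3 _) sub1)).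
    rewrite (hpqE _ _ (Sc m) L (c3 _) (zsub _ _ _ _ _ (d3 _) sub2)).
    rewrite -big_split; apply: eq_bigr => p' _; rewrite -big_split; apply: eq_bigr => q' _.
    rewrite d1 (Hr _ _ _ [:: (c m p', d n q'); (c m p', d n' q')]); last exact: te_addr.
    exact: (Ha _ _ [:: _] [:: _]).
  + move=> n; rewrite /h !big_cons !big_nil /= !addr0 /hpq.
    by apply: big1 => p' _; apply: big1 => q' _; rewrite c0 H0l.
  + move=> m; rewrite /h !big_cons !big_nil /= !addr0 /hpq.
    by apply: big1 => p' _; apply: big1 => q' _; rewrite d0 H0r.
  + move=> m a n; rewrite /h !big_cons !big_nil /= !addr0.
    rewrite (hpqE _ _ (Sc m) (Sd n)); last 2 first.
    - by move=> z zs; rewrite c2 c3 // mulr0.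
    - exact: d3.
    rewrite (hpqE _ _ (Sc m) (Sd n)); last 2 first.
    - exact: c3.
    - by move=> z zs; rewrite d2 d3 // mulr0.
    apply: eq_bigr => p' _; apply: eq_bigr => q' _.
    by rewrite c2 d2; apply: Hr; exact: te_bal.
  + by move=> m m' n ->.
  + by move=> m n n' ->.
- by move=> x y; rewrite /h big_cat.
- move=> u x; rewrite /h /= big_flatten big_map scaler_sumr; apply: eq_bigr => -[p q] _ /=.
  rewrite big_map.
  have key (e : U * U) : hpq (e.1 *: p) (e.2 *: q) =
      \sum_(p' <- undup (Sc p)) \sum_(q' <- undup (Sd q)) H p' q' [:: (e.1 * c p p', e.2 * d q q')].
    rewrite (hpqE _ _ (Sc p) (Sd q)).
    - by apply: eq_bigr => p' _; apply: eq_bigr => q' _; rewrite c2 d2.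
    - by move=> z zs; rewrite c2 c3 // mulr0.
    - by move=> z zs; rewrite d2 d3 // mulr0.
  rewrite (eq_bigr _ (fun e _ => key e)) /= exchange_big /hpq scaler_sumr.
  apply: eq_bigr => p' _; rewrite exchange_big scaler_sumr; apply: eq_bigr => q' _ /=.
  by rewrite -Hl /act /= cats0 Hmap.
- move=> x; rewrite /h (big_morph f fD f0) gsum; apply: eq_bigr => -[p q] _ /=.
  rewrite /hpq (big_morph f fD f0).
  transitivity (g [:: (\sum_(x <- undup (Sc p)) c p x *: x, q)]); last by rewrite -c4.
  rewrite gsuml; apply: eq_bigr => p' _.
  rewrite (big_morph f fD f0).
  transitivity (g [:: (c p p' *: p', \sum_(x <- undup (Sd q)) d q x *: x)]); last by rewrite -d4.
  by rewrite gsumr; apply: eq_bigr => q' _; rewrite Hf.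
Qed.
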